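(* A tree $T$ is skew-nontrivial (i.e., $\check T=T$) if and only if the distance between each pair of leaves of $T$ is even.
   Context: Skew forcing: vertices are colored blue or white; if any vertex $u$ (blue or white) has exactly one white neighbor $v$, then $u$ may force $v$ to become blue. The skew-nontrivial subgraph $\check G$ of a graph $G$ is obtained as follows: starting with no blue vertices, apply the skew forcing rule until no more forces are possible; then delete every blue vertex all of whose neighbors are blue, and delete every edge both of whose endpoints are blue. $G$ is skew-nontrivial if $\check G=G$. *)

(* Defs.v *)
From mathcomp Require Import all_boot.
Set Implicit Arguments. Unset Strict Implicit. Unset Printing Implicit Defensive.

Section Graphs.
Variable T : finType.
Implicit Type e : rel T.

Definition simple_graph e := irreflexive e /\ symmetric e.

Definition connected_graph e := forall x y : T, connect e x y.

Definition acyclic_graph e :=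
  forall p : seq T, uniq p -> 3 <= size p -> ~~ cycle e p.

Definition is_tree e := [/\ simple_graph e, connected_graph e & acyclic_graph e].

Definition leaf e (v : T) := #|[set w | e v w]| == 1.

Definition walk e (x y : T) (n : nat) :=
  exists p : seq T, [/\ size p = n, path e x p & last x p = y].

Definition graph_dist e (x y : T) (d : nat) :=
  walk e x y d /\ (forall m, walk e x y m -> d <= m).

(* One round of skew forcing, applied to every possible force at once:
   v becomes blue if some vertex u (of any colour) has v as its unique
   white neighbour. *)
Definition skew_step e (B : {set T}) : {set T} :=
  B :|: [set v | [exists u, e u v && [forall w, e u w ==> (w == v) || (w \in B)]]].

(* Final blue set: starting with no blue vertex, apply forces until no more are
   possible (#|T| rounds always suffice, since each non-final round adds a vertex). *)
Definition skew_closure e : {set T} := iter #|T| (skew_step e) set0.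

Definition skew_check_vertices e : {set T} :=
  let B := skew_closure e in
  [set v | ~~ ((v \in B) && [forall w, e v w ==> (w \in B)])].

Definition skew_check_edges e : rel T :=
  let B := skew_closure e in
  fun u v => e u v && ~~ ((u \in B) && (v \in B)).

Definition skew_nontrivial e :=
  skew_check_vertices e = [set: T] /\ skew_check_edges e =2 e.

End Graphs.

(* Main.v *)
Require Import Defs.
From mathcomp Require Import all_boot.
From mathcomp Require Import zify.
From Stdlib Require Import Classical.

Set Implicit Arguments. Unset Strict Implicit. Unset Printing Implicit Defensive.

Section Proof5.
Variables (T : finType) (e : rel T).
Hypothesis irr : irreflexive e.
Hypothesis sym : symmetric e.

Local Notation B := (skew_closure e).

Lemma step_mono : {homo skew_step e : X Y / X \subset Y}.
Proof.
move=> X Y XY; apply/subsetP=> v; rewrite !inE => /orP[vX|/existsP[u /andP[euv /forallP H]]].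
  by rewrite (subsetP XY).
apply/orP; right; apply/existsP; exists u; rewrite euv /=; apply/forallP=> w.
apply/implyP=> euw; case/orP: (implyP (H w) euw) => [->//|wX].
by rewrite (subsetP XY) ?orbT.
Qed.

Lemma closure_fix : skew_step e B = B.
Proof. exact: (fixsetK step_mono). Qed.

Lemma closedB u v : e u v -> [forall w, e u w ==> (w == v) || (w \in B)] -> v \in B.
Proof.
move=> euv H; rewrite -closure_fix inE; apply/orP; right; rewrite inE.
by apply/existsP; exists u; rewrite euv.
Qed.

Definition Qp z y r := [&& uniq (z :: y :: r), path e z (y :: r) & all (fun x => x \notin B) (z :: y :: r)].

Lemma Qp_ext (acyc : acyclic_graph e) z y r : Qp z y r -> exists w, Qp w z (y :: r).
Proof.
case/and3P=> U P A.
have ezy : e z y by case/andP: P.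
have yW : y \notin B by move: A => /= /and3P[].
have : ~~ [forall w, e z w ==> (w == y) || (w \in B)].
  by apply/negP => H; move: yW; rewrite (closedB ezy H).
rewrite negb_forall => /existsP[w]; rewrite negb_imply negb_or => /and3P[ezw wy wB].
case wl: (w \in z :: y :: r).
  have wz : w != z by apply/negP=> /eqP wz; move: ezw; rewrite wz irr.
  move: wl; rewrite !inE (negbTE wz) (negbTE wy) /= => wr.
  case/splitPr: wr U P A => r1 r2 U P A.
  exfalso.
  have Hu : uniq (z :: y :: r1 ++ [:: w]).
    move: U; rewrite -[r1 ++ w :: r2]/(r1 ++ [:: w] ++ r2) catA.
    rewrite -[z :: y :: (r1 ++ [:: w]) ++ r2]/((z :: y :: r1 ++ [:: w]) ++ r2).
    by rewrite cat_uniq => /andP[].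
  have Hs : 3 <= size (z :: y :: r1 ++ [:: w]) by rewrite /= size_cat /=; lia.
  move: (acyc _ Hu Hs); rewrite /cycle rcons_path /= last_cat /= negb_and => /orP[]; apply/negP/negPn.
    move: P; rewrite -[y :: r1 ++ w :: r2]/((y :: r1) ++ (w :: r2)) cat_path /=.
    by case/andP=> -> ; rewrite cat_path => /andP[-> /= /andP[-> _]].
  by rewrite sym.
exists w; rewrite /Qp.
move: wl U P A; rewrite /= => /negbT; rewrite !inE => /norP[wz /norP[wy' wr]].
move=> /andP[zn U] -> /andP[-> ->].
by move: zn U; rewrite /= => -> /andP[-> ->]; rewrite (negbTE wz) (negbTE wy') (negbTE wr) sym ezw wB.
Qed.

Lemma white_edge (acyc : acyclic_graph e) u v : e u v -> (u \in B) || (v \in B).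
Proof.
move=> euv; apply/negPn/negP; rewrite negb_or => /andP[uW vW].
have Q0 : Qp u v [::].
  rewrite /Qp /= !inE uW vW euv !andbT /=.
  by apply/negP=> /eqP E; move: euv; rewrite E irr.
have big : forall n, exists z y r, Qp z y r /\ size r = n.
  elim=> [|n [z [y [r [Q Hs]]]]]; first by exists u, v, [::].
  have [w Qw] := Qp_ext acyc Q; exists w, z, (y :: r); by rewrite /= Hs.
have [z [y [r [Q Hs]]]] := big #|T|.
case/and3P: Q => U _ _.
have := max_card (mem (z :: y :: r)); rewrite (card_uniqP U) /= Hs; by rewrite ltnNge leqnSn.
Qed.

Lemma walk_cat x y z m n : walk e x y m -> walk e y z n -> walk e x z (m + n).
Proof.
move=> [p [Sp Pp Lp]] [q [Sq Pq Lq]]; exists (p ++ q).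
by rewrite size_cat cat_path last_cat Lp Pp Pq Sp Sq.
Qed.

Lemma walk_rev x y n : walk e x y n -> walk e y x n.
Proof.
move=> [p [<- Pp <-]]; elim: p x Pp => [|a p IH] x /=.
  by move=> _; exists [::].
case/andP=> exa Pp; have [q [Sq Pq Lq]] := IH a Pp.
exists (rcons q x); rewrite size_rcons rcons_path Pq Lq last_rcons Sq sym exa.
by [].
Qed.

Lemma walk_edge x y z n : walk e x y n -> e y z -> walk e x z n.+1.
Proof.
move=> W eyz; rewrite -addn1; apply: walk_cat W _.
by exists [:: z]; rewrite /= eyz.
Qed.

Lemma notuniq_split (c : seq T) : ~~ uniq c ->
  exists s1 z s2 s3, c = s1 ++ z :: s2 ++ z :: s3.
Proof.
elim: c => [|a c IH] //=; rewrite negb_and negbK.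
case ac: (a \in c) => /=.
  by move=> _; case/splitPr: ac => s2 s3; exists [::], a, s2, s3.
move=> /IH[s1 [z [s2 [s3 ->]]]]; by exists (a :: s1), z, s2, s3.
Qed.

Lemma no_odd_cycle (acyc : acyclic_graph e) c : cycle e c -> ~~ odd (size c).
Proof.
move: {2}(size c) (leqnn (size c)) => n; elim: n c => [|n IH] c Hs Cc.
  by move: Hs; rewrite leqn0 => /eqP ->.
case U: (uniq c).
  case: (leqP 3 (size c)) => H3.
    by move: (acyc c U H3); rewrite Cc.
  case: c U Hs Cc H3 => [|a [|b [|d c]]] //= _ _.
  by rewrite irr.
have [s1 [z [s2 [s3 Ec]]]] := notuniq_split (negbT U).
have : cycle e (rot (size s1) c) by rewrite rot_cycle.
rewrite Ec rot_size_cat -cat_cons -catA /= => Cc'.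
set t := s3 ++ s1 in Cc'.
have C2 : cycle e (z :: s2).
  move: (Cc'); rewrite /cycle -cat_rcons rcons_cat cat_path rcons_path.
  by case/andP.
have C3 : cycle e (z :: t).
  move: Cc'; rewrite /cycle rcons_cat cat_path /=.
  by case/andP=> _ /andP[].
have Esz : size (s1 ++ z :: s2 ++ z :: s3) = (size (z :: s2) + size (z :: t))%N.
  by rewrite /t !size_cat /= !size_cat /=; lia.
have H2 := IH (z :: s2); have H3 := IH (z :: t).
rewrite Ec Esz in Hs; rewrite Esz oddD.
move: (H2 ltac:(simpl in *; lia) C2) (H3 ltac:(simpl in *; lia) C3).
by move=> /negbTE -> /negbTE ->.
Qed.

Lemma walk_closed (acyc : acyclic_graph e) x n : walk e x x n -> ~~ odd n.
Proof.
move=> [p [<- Pp Lp]]; case/lastP: p Pp Lp => [|q z] //.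
rewrite last_rcons => Pp Ez; subst z.
have := no_odd_cycle acyc (c := x :: q); rewrite /cycle size_rcons /=; apply.
exact: Pp.
Qed.

Lemma walk_parity (acyc : acyclic_graph e) x y m n :
  walk e x y m -> walk e x y n -> odd m = odd n.
Proof.
move=> Wm Wn; have := walk_closed acyc (walk_cat Wm (walk_rev Wn)).
by rewrite oddD; case: (odd m); case: (odd n).
Qed.

Lemma walk_conn (conn : connected_graph e) x y : exists n, walk e x y n.
Proof.
have /connectP[p Pp ->] := conn x y; by exists (size p), p.
Qed.

Lemma min_ex (P : nat -> Prop) n : P n -> exists d, P d /\ forall m, P m -> d <= m.
Proof.
elim: n {-2}n (leqnn n) => [|N IH] k Hk Pk.
  exists k; split=> // m _; move: Hk; rewrite leqn0 => /eqP ->; by [].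
case: (classic (exists m, m < k /\ P m)) => [[m [mk Pm]]|NE].
  by apply: (IH m) => //; lia.
exists k; split=> // m Pm; rewrite leqNgt; apply/negP => mk; apply: NE; by exists m.
Qed.

Lemma leaf_single x : leaf e x -> exists y, [set w | e x w] = [set y].
Proof. by move=> /cards1P. Qed.


Lemma fwd (acyc : acyclic_graph e)
  (indep : forall u v, e u v -> ~~ ((u \in B) && (v \in B))) x y :
  leaf e x -> leaf e y -> forall d, graph_dist e x y d -> ~~ odd d.
Proof.
have alt : forall u v, e u v -> (v \in B) = ~~ (u \in B).
  move=> u v euv; have := white_edge acyc euv; have := indep u v euv.
  by case: (u \in B); case: (v \in B).
have col : forall p x, path e x p -> (last x p \in B) = (x \in B) (+) odd (size p).
  elim=> [|a p IH] x0 /=; first by rewrite addbF.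
  case/andP=> exa Pp; rewrite (IH a Pp) (alt x0 a exa).
  by case: (x0 \in B); case: (odd (size p)).
have lw : forall z, leaf e z -> z \notin B.
  move=> z /leaf_single[w Hw].
  have ezw : e z w by have := set11 w; rewrite -Hw inE.
  have wB : w \in B.
    apply: (closedB ezw); apply/forallP=> w'; apply/implyP=> ezw'.
    have : w' \in [set v | e z v] by rewrite inE.
    by rewrite Hw inE => ->.
  by apply/negP=> zB; move: (indep z w ezw); rewrite zB wB.
move=> lx ly d [[p [Sp Pp Lp]] _].
have := col p x Pp; rewrite Lp Sp (negbTE (lw x lx)) (negbTE (lw y ly)) /=.
by move=> <-.
Qed.

Lemma bwd (conn : connected_graph e) (acyc : acyclic_graph e)
  (H : forall x y : T, leaf e x -> leaf e y ->
     forall d : nat, graph_dist e x y d -> ~~ odd d) : skew_nontrivial e.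
Proof.
pose oddw x v := exists n, walk e x v n /\ odd n.
have Fact1 : forall x u n, leaf e x -> leaf e u -> walk e x u n -> ~~ odd n.
  move=> x u n lx lu W.
  have [d [Wd Md]] := min_ex (P := walk e x u) W.
  by rewrite (walk_parity acyc W Wd); apply: (H x u lx lu d).
pose Inv v := (exists x0, leaf e x0) /\ forall x0, leaf e x0 -> oddw x0 v.
have step_inv : forall X : {set T}, (forall v, v \in X -> Inv v) ->
    forall v, v \in skew_step e X -> Inv v.
  move=> X HX v; rewrite !inE => /orP[/HX//|/existsP[u /andP[euv /forallP F]]].
  case: (boolP [exists w, e u w && (w != v)]).
    case/existsP=> w /andP[euw wv].
    have wX : w \in X by move: (implyP (F w) euw); rewrite (negbTE wv).
    have [[x0 l0] Hw] := HX w wX.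
    split; first by exists x0.
    move=> x1 l1; have [m [Wm om]] := Hw x1 l1.
    exists m.+2; split; last by rewrite /= negbK.
    by apply: walk_edge euv; apply: walk_edge Wm _; rewrite sym.
  rewrite negb_exists => /forallP NE.
  have lu : leaf e u.
    rewrite /leaf; apply/cards1P; exists v; apply/setP=> w; rewrite !inE.
    apply/idP/idP => [euw | /eqP ->//].
    by have := NE w; rewrite euw /= negbK.
  split; first by exists u.
  move=> x0 l0; have [n Wn] := walk_conn conn x0 u.
  have en := Fact1 _ _ _ l0 lu Wn.
  by exists n.+1; split; [exact: walk_edge Wn euv | rewrite /= en].
have B_inv : forall v, v \in B -> Inv v.
  rewrite /skew_closure; elim: #|T| => [|k IH] v /=; first by rewrite inE.
  exact: step_inv IH v.
have edge_contra : forall u v, e u v -> Inv u -> Inv v -> False.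
  move=> u v euv [[x0 l0] Hu] [_ Hv].
  have [m [Wm om]] := Hu x0 l0; have [k [Wk ok]] := Hv x0 l0.
  by have := walk_parity acyc (walk_edge Wm euv) Wk; rewrite /= om ok.
split.
  apply/setP=> v; rewrite /skew_check_vertices !inE.
  apply/negP=> /andP[vB /forallP Hn].
  have [[x0 l0] Hv] := B_inv v vB.
  have [n [[p [Sp Pp Lp]] on]] := Hv x0 l0.
  case/lastP: p Sp Pp Lp => [|q w].
    by move=> Sp; move: on; rewrite -Sp.
  move=> _; rewrite rcons_path last_rcons => /andP[_ ew] Ew; subst w.
  have wB : last x0 q \in B by apply: (implyP (Hn _)); rewrite sym.
  exact: edge_contra ew (B_inv _ wB) (B_inv _ vB).
move=> u v; rewrite /skew_check_edges; case euv: (e u v) => //=.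
apply/negP => /andP[uB vB]; exact: edge_contra euv (B_inv _ uB) (B_inv _ vB).
Qed.

End Proof5.

Theorem proposition5p25 (T : finType) (e : rel T) :
  is_tree e ->
  (skew_nontrivial e <->
   forall x y : T, leaf e x -> leaf e y ->
     forall d : nat, graph_dist e x y d -> ~~ odd d).
Proof.
move=> [[irr sym] conn acyc]; split.
  move=> [_ HE] x y lx ly d Hd; apply: (fwd irr sym acyc _ lx ly Hd).
  by move=> u v euv; move: (HE u v); rewrite /skew_check_edges euv /= => ->.
by move=> H; apply: bwd.
Qed.
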